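(* Let $n=2^s$, $q=2^r$ ($s,r$ positive integers). For $\beta\in\mathbb{F}_q$ let $n_\beta=|\{g\in SL(n,q):Tr(g)=\beta\}|$. Then \[ n_\beta=q^{\binom{n}{2}-1}\Big\{\prod_{j=2}^{n}(q^j-1)+1+q\,\theta(\beta)\Big\},\qquad \theta(\beta)=\begin{cases}K_{n-2}(\lambda;\beta^{-1}),&\beta\ne0,\\0,&\beta=0.\end{cases} \]
   Context: $Tr$ is the matrix trace. $\mathbb{F}_q$ is the field with $q$ elements, $tr$ the absolute trace to $\mathbb{F}_2$, $\lambda(x)=(-1)^{tr(x)}$. For $m\ge1$ and $a\in\mathbb{F}_q^*$, $K_m(\lambda;a)=\sum_{\alpha_1,\dots,\alpha_m\in\mathbb{F}_q^*}\lambda(\alpha_1+\cdots+\alpha_m+a\alpha_1^{-1}\cdots\alpha_m^{-1})$; by convention $K_0(\lambda;a)=\lambda(a)$. *)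

(* Defs.v *)
From HB Require Import structures.
From mathcomp Require Import all_boot all_order all_algebra all_field.
Set Implicit Arguments. Unset Strict Implicit. Unset Printing Implicit Defensive.
Import Order.TTheory GRing.Theory Num.Theory.
Local Open Scope ring_scope.

Definition abs_tr (F : finFieldType) (r : nat) (x : F) : F :=
  \sum_(i < r) x ^+ (2 ^ i).

Definition lam (F : finFieldType) (r : nat) (x : F) : int :=
  if abs_tr r x == 0 then 1 else -1.

Definition kloosterman (F : finFieldType) (r m : nat) (a : F) : int :=
  if m is 0 then lam r a else
  \sum_(al : {ffun 'I_m -> F} | [forall i, al i != 0])
     lam r (\sum_(i < m) al i + a * (\prod_(i < m) al i)^-1).

Definition theta (F : finFieldType) (r n : nat) (b : F) : int :=
  if b == 0 then 0 else kloosterman r (n - 2) b^-1.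

Definition n_beta (F : finFieldType) (n : nat) (b : F) : nat :=
  #|[set g : 'M[F]_n | (\det g == 1) && (\tr g == b)]|.

(* Main.v *)
Require Import Defs.
From HB Require Import structures.
From mathcomp Require Import all_boot all_order all_algebra all_field.
From mathcomp Require Import zify ring.
Set Implicit Arguments. Unset Strict Implicit. Unset Printing Implicit Defensive.
Import GRing.Theory Num.Theory.
Local Open Scope ring_scope.


Section Char.
Variables (F : finFieldType) (r : nat).
Hypothesis hr : (0 < r)%N.
Hypothesis hF : #|F| = (2 ^ r)%N.

Lemma ch2 : (2%N \in [pchar F]).
Proof. exact: (card_finPcharP hF). Qed.

Lemma two0 : 2%:R = 0 :> F.
Proof. exact: (pcharf0 ch2). Qed.

Lemma oppF (x : F) : - x = x.
Proof. by apply/eqP; rewrite -subr_eq0 -opprD oppr_eq0 -mulr2n -mulr_natr two0 mulr0. Qed.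

Lemma sqrD (x y : F) : (x + y) ^+ 2 = x ^+ 2 + y ^+ 2.
Proof. by rewrite sqrrD -mulr_natr two0 mulr0 addr0. Qed.

Lemma expD2 i (x y : F) : (x + y) ^+ (2 ^ i) = x ^+ (2 ^ i) + y ^+ (2 ^ i).
Proof.
elim: i => [|i IH]; first by rewrite !expr1.
by rewrite expnSr !exprM IH sqrD.
Qed.

Lemma trD (x y : F) : abs_tr r (x + y) = abs_tr r x + abs_tr r y.
Proof. by rewrite /abs_tr -big_split /=; apply: eq_bigr => i _; rewrite expD2. Qed.

Lemma sqr_sum (I : finType) (f : I -> F) : (\sum_i f i) ^+ 2 = \sum_i f i ^+ 2.
Proof.
apply: (big_morph (fun x => x ^+ 2)); first by move=> x y; rewrite sqrD.
by rewrite expr0n.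
Qed.

Lemma tr_sqr (x : F) : (abs_tr r x) ^+ 2 = abs_tr r x.
Proof.
rewrite /abs_tr sqr_sum.
under eq_bigr do rewrite -exprM -expnSr.
have hF' := hF; move: hF'; case: r hr => // r' _ hF'.
rewrite big_ord_recr /= -hF' expf_card [RHS]big_ord_recl /= expn0 expr1 addrC.
by congr (_ + _); apply: eq_bigr => i _.
Qed.

Lemma tr01 (x : F) : abs_tr r x = 0 \/ abs_tr r x = 1.
Proof.
have := tr_sqr x; set t := abs_tr r x => h.
have : t * (t - 1) = 0 by rewrite mulrBr mulr1 -expr2 h subrr.
by move/eqP; rewrite mulf_eq0 subr_eq0 => /orP[] /eqP; [left|right].
Qed.

Lemma tr_sq_arg (x : F) : abs_tr r (x ^+ 2) = abs_tr r x.
Proof.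
rewrite -[RHS]tr_sqr /abs_tr sqr_sum; apply: eq_bigr => i _.
by rewrite -!exprM mulnC.
Qed.

Lemma lamD (x y : F) : lam r (x + y) = lam r x * lam r y.
Proof.
rewrite /lam trD; case: (tr01 x) => ->; case: (tr01 y) => ->;
  rewrite ?addr0 ?add0r ?eqxx ?oner_eq0 ?mulr1 ?mul1r //.
by rewrite -mulr2n -mulr_natr two0 mulr0 eqxx mulrNN mulr1.
Qed.

Lemma lam0 : lam r (0 : F) = 1.
Proof. by rewrite /lam /abs_tr big1 ?eqxx // => i _; rewrite expr0n expn_eq0. Qed.

Lemma lam_sq (x : F) : lam r (x ^+ 2) = lam r x.
Proof. by rewrite /lam tr_sq_arg. Qed.

Lemma lam_pm1 (x : F) : lam r x * lam r x = 1.
Proof. by rewrite /lam; case: ifP => _; rewrite ?mulr1 ?mulrNN ?mulr1. Qed.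

Lemma lam_exists : exists t : F, lam r t = -1.
Proof.
suff [t ht] : exists t : F, abs_tr r t != 0 by exists t; rewrite /lam (negbTE ht).
apply/existsP; apply: contraT; rewrite negb_exists => /forallP /= H.
pose p : {poly F} := \sum_(i < r) 'X^(2 ^ i).
have pn0 : p != 0.
  apply/eqP => /(congr1 (fun p : {poly F} => p`_1)); rewrite coef0 coef_sum.
  case: r hr => // r' _; rewrite big_ord_recl /= coefXn /= big1 ?addr0.
    by move/eqP; rewrite oner_eq0.
  move=> i _; rewrite coefXn.
  suff -> : (1 == 2 ^ (bump 0 i))%N = false by [].
  by apply/negbTE; rewrite eq_sym -(expn0 2) eqn_exp2l.
have := max_poly_roots pn0 (rs := enum F).
rewrite enum_uniq; have -> : all (root p) (enum F).
  apply/allP => x _; rewrite /root horner_sum.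
  rewrite (eq_bigr (fun i : 'I_r => x ^+ (2 ^ i))) => [|i _]; last by rewrite hornerXn.
  by have := H x; rewrite negbK.
move=> /(_ isT isT); rewrite -cardE hF.
have : (size p <= 2 ^ r)%N.
  rewrite /p; apply: (big_ind (fun p : {poly F} => size p <= 2 ^ r)%N).
  - by rewrite size_poly0.
  - by move=> p1 p2 h1 h2; apply: leq_trans (size_polyD _ _) _; rewrite geq_max h1.
  move=> i _; rewrite size_polyXn.
  case: r hr i => // r' _ i; rewrite expnS mul2n -addnn.
  apply: (@leq_trans (2 ^ r').+1); last by rewrite -addn1 leq_add2l expn_gt0.
  by rewrite ltnS leq_exp2l // -ltnS.
by move=> h1 h2; have := leq_trans h2 h1; rewrite ltnn.
Qed.

End Char.


Lemma sum_cancel (T : finType) (f : T -> int) (g : T -> T) :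
  injective g -> (forall v, f (g v) = - f v) -> \sum_v f v = 0.
Proof.
move=> ig h; have e : \sum_v f v = - \sum_v f v.
  rewrite {1}(reindex_inj ig) /= -sumrN; by apply: eq_bigr => v _; rewrite h.
by move: e; set S := \sum_v f v => e; lia.
Qed.

Section B.
Variables (F : finFieldType) (r : nat).
Hypothesis hr : (0 < r)%N.
Hypothesis hF : #|F| = (2 ^ r)%N.
Local Notation psi := (lam r).

Lemma sum_lam_aff (c d : F) : c != 0 -> \sum_x psi (c * x + d) = 0.
Proof.
move=> cn0; have [t ht] := lam_exists hr hF.
apply: (sum_cancel (g := fun x => x + t / c)); first exact: addIr.
move=> x; rewrite mulrDr mulrCA divff // mulr1 addrAC lamD // ht.
by rewrite mulrN1.
Qed.

Lemma sum_lam_nz (c : F) : c != 0 -> \sum_(x | x != 0) psi (c * x) = -1.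
Proof.
move=> cn0; have := sum_lam_aff 0 cn0; rewrite (bigD1 0) //= mulr0 addr0 lam0 //.
under eq_bigr do rewrite addr0.
by move=> h; apply/eqP; rewrite -subr_eq0 opprK addrC h.
Qed.

Lemma sum_lam_nz_y (y : F) :
  \sum_(x | x != 0) psi (x * y) = (if y == 0 then (#|F|.-1)%:R else -1).
Proof.
case: eqP => [->|/eqP yn0].
  under eq_bigr do rewrite mulr0 lam0 //.
  by rewrite sumr_const -(cardC1 0) /=.
by under eq_bigr do rewrite mulrC; exact: sum_lam_nz.
Qed.

Lemma sum_lam_all (z : F) :
  \sum_a psi (a * z) = (if z == 0 then (#|F|)%:R else 0).
Proof.
case: eqP => [->|/eqP zn0].
  by under eq_bigr do rewrite mulr0 lam0 //; rewrite sumr_const.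
have := sum_lam_aff 0 zn0; under eq_bigr do rewrite addr0 mulrC.
by [].
Qed.

Lemma lamN (x : F) : psi (- x) = psi x.
Proof. by rewrite (oppF hF). Qed.

End B.


Lemma sum_block (F : finFieldType) n (f : 'M[F]_(1 + n) -> int) :
  \sum_g f g = \sum_(x : F) \sum_(u : 'rV[F]_n) \sum_(v : 'cV[F]_n)
      \sum_(h : 'M[F]_n) f (block_mx x%:M u v h).
Proof.
symmetry.
under eq_bigr do under eq_bigr do rewrite pair_bigA.
under eq_bigr do rewrite pair_bigA.
rewrite pair_bigA /=.
pose bl (p : F * ('rV[F]_n * ('cV[F]_n * 'M[F]_n))) : 'M[F]_(1 + n) :=
  block_mx p.1%:M p.2.1 p.2.2.1 p.2.2.2.
rewrite [RHS](reindex bl) //.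
exists (fun g : 'M[F]_(1 + n) => (ulsubmx g 0 0, (ursubmx g, (dlsubmx g, drsubmx g)))).
  move=> [x [u [v h]]] _; rewrite /bl /= block_mxKul block_mxKur block_mxKdl block_mxKdr.
  by rewrite mxE eqxx.
move=> g _; rewrite /bl /= -mx11_scalar; exact: submxK.
Qed.

Definition Zs (F : finFieldType) (r n : nat) (d a : F) : int :=
  \sum_(g : 'M[F]_n | \det g == d) lam r (a * \tr g).

Section C.
Variables (F : finFieldType) (r : nat).
Hypothesis hr : (0 < r)%N.
Hypothesis hF : #|F| = (2 ^ r)%N.
Local Notation psi := (lam r).

Lemma exists_w n (u : 'rV[F]_n) (s : F) : u != 0 -> exists w : 'cV[F]_n, \tr (w *m u) = s.
Proof.
move=> un0.
have [j hj] : exists j, u 0 j != 0.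
  apply/existsP; apply: contraT; rewrite negb_exists => /forallP H.
  move: un0; apply: contraR => _; apply/eqP/matrixP => i j.
  by rewrite (ord1 i) mxE; have := H j; rewrite negbK => /eqP.
exists ((s / u 0 j) *: delta_mx j 0).
rewrite mxtrace_mulC -scalemxAr mxtraceZ -colE trace_mx11 mxE.
by rewrite -mulrA mulVf // mulr1.
Qed.

Lemma sum_uv n (c : F) : c != 0 ->
  \sum_(u : 'rV[F]_n) \sum_(v : 'cV[F]_n) psi (c * \tr (v *m u)) = (#|F| ^ n)%:R.
Proof.
move=> cn0; rewrite (bigD1 0) //= [X in _ + X]big1 ?addr0.
  under eq_bigr do rewrite mulmx0 mxtrace0 mulr0 lam0 //.
  by rewrite sumr_const card_mx muln1.
move=> u un0.
have [t ht] := lam_exists hr hF; have [w hw] := exists_w (t / c) un0.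
apply: (sum_cancel (g := fun v => v + w)); first exact: addIr.
move=> v; rewrite mulmxDl mxtraceD hw mulrDr mulrCA divff // mulr1.
by rewrite lamD // ht mulrN1.
Qed.


Lemma Zs_rec n (d a : F) : d != 0 -> a != 0 ->
  Zs r (1 + n) d a = (#|F| ^ n)%:R * \sum_(x | x != 0) psi (a * x) * Zs r n (d / x) a.
Proof.
move=> dn0 an0.
rewrite /Zs big_mkcond sum_block (bigD1 0) //=.
rewrite [X in X + _]big1 ?add0r; last first.
  move=> u _; apply: big1 => v _.
  case: (eqVneq u 0) => [->|un0].
    apply: big1 => h _; rewrite det_lblock det_scalar1 mul0r.
    by rewrite eq_sym (negbTE dn0).
  have [t ht] := lam_exists hr hF; have [w hw] := exists_w (t / a) un0.
  apply: (sum_cancel (g := fun h => h + w *m u)); first exact: addIr.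
  move=> h.
  have e : block_mx 0%:M u v (h + w *m u) = block_mx 1%:M 0 w 1%:M *m block_mx 0%:M u v h.
    by rewrite mulmx_block ?mul1mx ?mul0mx ?mulmx0 mul_mx_scalar scale0r !addr0 add0r addrC.
  rewrite {1}e det_mulmx det_lblock !det1 !mul1r.
  case: ifP => _; last by rewrite oppr0.
  rewrite !mxtrace_block mxtraceD hw !mulrDr mulrCA divff // mulr1 addrA lamD // ht.
  by rewrite mulrN1.
rewrite big_distrr /=; apply: eq_bigr => x xn0.
have hx : forall (u : 'rV[F]_n) (v : 'cV[F]_n), \sum_(h : 'M[F]_n)
    (if \det (block_mx x%:M u v h) == d then psi (a * \tr (block_mx x%:M u v h)) else 0)
   = psi (a * x) * Zs r n (d / x) a * psi (a / x * \tr (v *m u)).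
  move=> u v; rewrite (reindex_inj (addIr (x^-1 *: (v *m u)))) /=.
  have eb : forall h, block_mx x%:M u v (h + x^-1 *: (v *m u)) =
     block_mx 1%:M 0 (x^-1 *: v) 1%:M *m block_mx x%:M u 0 h.
    move=> h; rewrite mulmx_block ?mul1mx ?mul0mx ?mulmx0 mul_mx_scalar ?addr0 ?add0r.
    by rewrite scalerA divff // scale1r -scalemxAl addrC.
  under eq_bigr do rewrite eb det_mulmx det_lblock det_ublock !det1 mul1r det_scalar1.
  rewrite /Zs big_distrr big_distrl /= [in RHS]big_mkcond; apply: eq_bigr => h _; rewrite mul1r.
  have -> : (x * \det h == d) = (\det h == d / x).
    by apply/eqP/eqP => [<-|->]; field.
  case: ifP => _ //.
  rewrite -eb mxtrace_block mxtraceD mxtraceZ mxtrace_scalar /=.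
  by rewrite !mulrDr !lamD // mulr1n -[a / x * _]mulrA mulrA.
under eq_bigr do under eq_bigr do rewrite hx.
under eq_bigr do rewrite -big_distrr /=.
rewrite -big_distrr /= sum_uv ?mulf_neq0 ?invr_eq0 //.
by rewrite /Zs mulrC.
Qed.

End C.

Fixpoint Hs (F : finFieldType) (r m : nat) (d a : F) : int :=
  if m is m'.+1 then \sum_(x | x != 0) lam r (a * x) * Hs r m' (d / x) a
  else (d == 1)%:R.

Section C2.
Variables (F : finFieldType) (r : nat).
Hypothesis hr : (0 < r)%N.
Hypothesis hF : #|F| = (2 ^ r)%N.
Local Notation psi := (lam r).

Lemma Zs0 (d a : F) : Zs r 0 d a = (d == 1)%:R.
Proof.
rewrite /Zs big_mkcond /=.
rewrite (eq_bigr (fun _ => (d == 1)%:R)) => [|g _]; last first.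
  rewrite det_mx00 eq_sym; case: eqP => // _.
  by rewrite (_ : \tr g = 0) ?mulr0 ?lam0 // /mxtrace big_ord0.
by rewrite sumr_const card_mx /= expn0 mulr1n.
Qed.

Lemma Zs_H n (d a : F) : d != 0 -> a != 0 ->
  Zs r n d a = (#|F| ^ 'C(n, 2))%:R * Hs r n d a.
Proof.
elim: n d => [|n IH] d dn0 an0; first by rewrite Zs0 bin0n expn0 mul1r.
rewrite (Zs_rec hr hF) //= big_distrr /= big_distrr /=; apply: eq_bigr => x xn0.
rewrite IH ?mulf_neq0 ?invr_eq0 // binS bin1 addnC expnD natrM; ring.
Qed.

End C2.


Section D.
Variables (F : finFieldType) (r : nat).
Hypothesis hr : (0 < r)%N.
Hypothesis hF : #|F| = (2 ^ r)%N.
Local Notation psi := (lam r).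
Local Notation H := (Hs r).

Lemma H_scale m (d a : F) : a != 0 -> H m d a = H m (d * a ^+ m) 1.
Proof.
move=> an0; elim: m d => [|m IH] d /=; first by rewrite expr0 mulr1.
rewrite [RHS](reindex_inj (mulfI an0)) /=.
apply: eq_big => [x|x xn0]; first by rewrite mulf_eq0 negb_or an0.
rewrite mul1r IH; congr (_ * H _ _ _); rewrite exprS; field.
by rewrite an0 xn0.
Qed.

Lemma sq_inj : injective (fun y : F => y ^+ 2).
Proof.
move=> y z /= e.
have : (y + z) ^+ 2 = 0.
  by rewrite (sqrD hF) e -mulr2n -mulr_natr (two0 hF) mulr0.
move/eqP; rewrite expf_eq0 /= addr_eq0 => /eqP ->; exact: oppF hF _.
Qed.

Lemma pow2_inj s : injective (fun y : F => y ^+ (2 ^ s)).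
Proof.
elim: s => [|s IH] y z /=; first by rewrite !expr1.
by rewrite expnSr !exprM => /sq_inj /IH.
Qed.

Lemma H_sq m (e : F) : H m (e ^+ 2) 1 = H m e 1.
Proof.
elim: m e => [|m IH] e /=.
  by rewrite sqrf_eq1 (oppF hF 1) orbb.
rewrite (reindex_inj sq_inj) /=.
apply: eq_big => [x|x xn0]; first by rewrite sqrf_eq0.
by rewrite !mul1r lam_sq // -expr_div_n IH.
Qed.

Lemma H_pow2 s m (e : F) : H m (e ^+ (2 ^ s)) 1 = H m e 1.
Proof.
elim: s e => [|s IH] e; first by rewrite expr1.
by rewrite expnSr exprM H_sq IH.
Qed.

Definition Ts m := \sum_(e : F | e != 0) H m e 1.

Lemma Ts_val m : Ts m = (-1) ^+ m.
Proof.
rewrite /Ts; elim: m => [|m IH] /=.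
  rewrite (bigD1 1) ?oner_neq0 //= eqxx big1 ?addr0 // => e /andP[_ /negbTE ->].
  by [].
rewrite exchange_big /= exprS -IH -(sum_lam_nz hr hF (oner_neq0 F)) big_distrl /=.
apply: eq_bigr => x xn0; rewrite -big_distrr /=; congr (_ * _).
rewrite (reindex_inj (mulIf xn0)) /=.
apply: eq_big => [e|e en0]; first by rewrite mulf_eq0 negb_or xn0 andbT.
by rewrite mulfK.
Qed.

Lemma Gs m (c : F) : c != 0 ->
  \sum_(e : F | e != 0) psi (c * e) * H m.+1 e 1 = (#|F|)%:R * H m c^-1 1 - Ts m.
Proof.
move=> cn0 /=.
under eq_bigr do rewrite big_distrr /=.
rewrite exchange_big /=.
under eq_bigr => x xn0.
  rewrite (reindex_inj (mulIf xn0)) /=.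
  rewrite (eq_big (fun e => e != 0) (fun e => psi (x * (c * e + 1)) * H m e 1)); last first.
  - move=> e en0; rewrite mulfK // mul1r mulrDr mulr1 lamD // mulrA.
    by have -> : c * (e * x) = x * (c * e) by ring.
  - by move=> e; rewrite mulf_eq0 negb_or xn0 andbT.
  over.
rewrite exchange_big /=.
under eq_bigr do rewrite -big_distrl /= (sum_lam_nz_y hr hF).
have h0 : (0 < #|F|)%N by rewrite hF expn_gt0.
have hq : (#|F|.-1)%:R = (#|F|)%:R - 1 :> int.
  by rewrite -{2}(prednK h0) -addn1 natrD addrK.
rewrite /Ts (bigD1 c^-1) ?invr_eq0 //= [in RHS](bigD1 c^-1) ?invr_eq0 //=.
rewrite divff // (_ : 1 + 1 = 0 :> F) ?eqxx; last by rewrite -mulr2n -mulr_natr (two0 hF) mulr0.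
rewrite (eq_bigr (fun e => - H m e 1)); last first.
  move=> e /andP[en0 enc]; case: eqP => [h|_]; last by rewrite mulN1r.
  exfalso; move: enc; rewrite -(mulKf cn0 e).
  have -> : c * e = 1 by apply/eqP; rewrite -subr_eq0 (oppF hF) h.
  by rewrite mulr1 eqxx.
rewrite sumrN hq; ring.
Qed.

End D.

Section D2.
Variables (F : finFieldType) (r : nat).
Hypothesis hr : (0 < r)%N.
Hypothesis hF : #|F| = (2 ^ r)%N.
Local Notation psi := (lam r).
Local Notation H := (Hs r).

Lemma lam_pow2 s (z : F) : psi (z ^+ (2 ^ s)) = psi z.
Proof.
elim: s => [|s IH]; first by rewrite expr1.
by rewrite expnSr exprM lam_sq.
Qed.

Lemma Wsum s (b : F) : (0 < s)%N ->
  \sum_(a : F | a != 0) psi (a * b) * H (2 ^ s) 1 a =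
  if b == 0 then 1 else (#|F|)%:R * H (2 ^ s).-1 b^-1 1 + 1.
Proof.
move=> s0.
have e1 : \sum_(a : F | a != 0) psi (a * b) * H (2 ^ s) 1 a =
    \sum_(e : F | e != 0) psi (b ^+ (2 ^ s) * e) * H (2 ^ s) e 1.
  rewrite [RHS](reindex_inj (@pow2_inj F r hF s)) /=.
  apply: eq_big => [a|a an0]; first by rewrite expf_eq0 negb_and expn_gt0.
  by rewrite (H_scale _ _ _ an0) mul1r -exprMn lam_pow2 (mulrC b a).
rewrite e1; case: eqP => [->|/eqP bn0].
  under eq_bigr do rewrite expr0n expn_eq0 /= mul0r lam0 // mul1r.
  rewrite -/(@Ts F r (2 ^ s)) (Ts_val hr hF) -signr_odd oddX.
  by rewrite orbF; case: eqP s0 => // ->.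
have n1 : (2 ^ s = (2 ^ s).-1.+1)%N by rewrite prednK // expn_gt0.
rewrite [in LHS]n1 (Gs hr hF) ?expf_neq0 // (Ts_val hr hF) -exprVn -n1 (H_pow2 hr hF).
clear e1.
rewrite -signr_odd.
have -> : odd (2 ^ s).-1 = true.
  move: n1; case: s s0 => // s' _; rewrite expnS mul2n.
  case: (2 ^ s').*2 (odd_double (2 ^ s')) => // k ok ek.
  by move: ok; rewrite /= => /negbFE.
by rewrite /= expr1 opprK.
Qed.

End D2.


Section E.
Variables (F : finFieldType) (r : nat).
Hypothesis hr : (0 < r)%N.
Hypothesis hF : #|F| = (2 ^ r)%N.
Local Notation psi := (lam r).
Local Notation H := (Hs r).

Definition fcons m (x : F) (f : {ffun 'I_m -> F}) : {ffun 'I_m.+1 -> F} :=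
  [ffun i => if unlift ord0 i is Some j then f j else x].

Lemma fcons0 m x (f : {ffun 'I_m -> F}) : fcons x f ord0 = x.
Proof. by rewrite ffunE unlift_none. Qed.

Lemma fconsS m x (f : {ffun 'I_m -> F}) j : fcons x f (lift ord0 j) = f j.
Proof. by rewrite ffunE liftK. Qed.

Lemma sum_ffunS m (G : {ffun 'I_m.+1 -> F} -> int) :
  \sum_f G f = \sum_x \sum_(f : {ffun 'I_m -> F}) G (fcons x f).
Proof.
rewrite pair_bigA /= (reindex (fun p : F * {ffun 'I_m -> F} => fcons p.1 p.2)) //=.
exists (fun f : {ffun 'I_m.+1 -> F} => (f ord0, [ffun j => f (lift ord0 j)])).
  move=> [x f] _ /=; rewrite fcons0; congr (_, _); apply/ffunP => j.
  by rewrite ffunE fconsS.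
move=> f _ /=; apply/ffunP => i; rewrite ffunE.
by case: unliftP => [j ->|->]; rewrite ?ffunE.
Qed.

Lemma H_ffun m (d : F) : H m d 1 =
  \sum_(al : {ffun 'I_m -> F} | [forall i, al i != 0] && (\prod_i al i == d))
     psi (\sum_i al i).
Proof.
elim: m d => [|m IH] d /=.
  rewrite big_mkcond /= (eq_bigr (fun _ => (d == 1)%:R)) => [|al _]; last first.
    rewrite big_ord0 eq_sym; case: (_ == _); rewrite ?andbF ?andbT //=.
    rewrite (_ : [forall i, al i != 0] = true) /=; last by apply/forallP => -[].
    by rewrite big_ord0 lam0.
  by rewrite sumr_const card_ffun card_ord expn0 mulr1n.
rewrite [RHS]big_mkcond sum_ffunS [LHS]big_mkcond; apply: eq_bigr => x _.
case: (eqVneq x 0) => [->|xn0].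
  rewrite /=; symmetry; apply: big1 => f _.
  by rewrite (_ : [forall i, fcons 0 f i != 0] = false) //; apply/negbTE/forallPn;
    exists ord0; rewrite fcons0 eqxx.
rewrite /= IH big_distrr big_mkcond /=; apply: eq_bigr => f _.
have -> : [forall i, fcons x f i != 0] = [forall j, f j != 0].
  apply/forallP/forallP => [h j|h i]; first by have := h (lift ord0 j); rewrite fconsS.
  by rewrite /fcons ffunE; case: (unliftP ord0 i) => [j _|_].
rewrite big_ord_recl fcons0.
rewrite [X in x * X](eq_bigr f) => [|i _]; last exact: fconsS.
have -> : (x * \prod_i f i == d) = (\prod_i f i == d / x).
  by apply/eqP/eqP => [<-|->]; field.
case: ifP => _ //.
rewrite [in RHS]big_ord_recl fcons0 [X in _ + X](eq_bigr f) => [|i _]; last exact: fconsS.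
by rewrite mul1r lamD.
Qed.

Lemma H_kloosterman m (e : F) : e != 0 -> H m.+1 e 1 = kloosterman r m e.
Proof.
move=> en0; case: m => [|m].
  rewrite /= (bigD1 e) //= divff // eqxx mulr1 mul1r big1 ?addr0 // => x /andP[xn0 xe].
  case: eqP => [h|_]; last by rewrite mulr0.
  by exfalso; move: xe; rewrite -(divfK xn0 e) h mul1r eqxx.
have -> : H m.+2 e 1 = \sum_(x | x != 0) psi (1 * x) * H m.+1 (e / x) 1 by [].
rewrite /kloosterman.
under eq_bigr do rewrite H_ffun big_distrr /= big_mkcond /=.
rewrite exchange_big /= [RHS]big_mkcond; apply: eq_bigr => al _.
case: ifP => hal; last first.
  by apply: big1.
have Pn0 : \prod_i al i != 0.
  by apply/prodf_neq0 => i _; move/forallP: hal => ->.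
set P := \prod_i al i in Pn0 *.
rewrite (bigD1 (e / P)) ?mulf_neq0 ?invr_eq0 //=.
rewrite [X in _ + X]big1 ?addr0.
  by rewrite invf_div mulrCA divff // mulr1 eqxx mul1r lamD // mulrC.
move=> x /andP[xn0 xne]; case: eqP => [h|_] //.
by exfalso; move: xne; rewrite h invf_div mulrCA divff // mulr1 eqxx.
Qed.

End E.


Section G.
Variables (F : finFieldType).

Definition N1 n := #|[set g : 'M[F]_n | \det g == 1]|.

Lemma fiber_eq n (d : F) : d != 0 ->
  #|[set g : 'M[F]_n.+1 | \det g == d]| = N1 n.+1.
Proof.
move=> dn0.
pose D : 'M[F]_n.+1 := diag_mx (\row_i (if i == ord0 then d else 1)).
have dD : \det D = d.
  rewrite det_diag big_ord_recl mxE eqxx big1 ?mulr1 // => i _.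
  by rewrite mxE.
have uD : D \in unitmx by rewrite unitmxE dD unitfE.
rewrite /N1 -!sum1_card.
rewrite (reindex_inj (can_inj (mulKmx uD))) /=.
apply: eq_bigl => g; rewrite !inE det_mulmx dD.
by apply/eqP/eqP => [h|->]; [apply: (mulfI dn0); rewrite h mulr1 | rewrite mulr1].
Qed.

Lemma card_SL n : (0 < n)%N ->
  (N1 n * (#|F| - 1) = #|('GL_n[F])%g|)%N.
Proof.
case: n => // n _.
have -> : #|('GL_n.+1[F])%g| = #|[set g : 'M[F]_n.+1 | \det g != 0]|.
  rewrite cardsT /= card_sub; apply: eq_card => A.
  by rewrite !inE unitmxE unitfE.
rewrite -sum1_card (partition_big (fun g : 'M[F]_n.+1 => \det g) (fun d => d != 0)) /=;
  last by move=> g; rewrite inE.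
rewrite (eq_bigr (fun _ => N1 n.+1)); last first.
  move=> d dn0; rewrite -(fiber_eq n dn0) -sum1_card; apply: eq_bigl => g.
  by rewrite !inE; case: (eqVneq (\det g) d) => [->|]; rewrite ?dn0 ?andbF.
rewrite big_const iter_addn_0; congr (_ * _)%N.
by rewrite subn1 -(cardC1 (0 : F)); apply: eq_card => x; rewrite !inE.
Qed.

End G.

Unset Implicit Arguments.

Theorem corollary12 (F : finFieldType) (s r : nat) (n q : nat)
  (hs : (0 < s)%N) (hr : (0 < r)%N)
  (hn : n = (2 ^ s)%N) (hq : q = (2 ^ r)%N) (hF : #|F| = q)
  (b : F) :
  (n_beta n b)%:Z =
    (q%:Z) ^+ ('C(n, 2) - 1) *
    ((\prod_(2 <= j < n.+1) ((q%:Z) ^+ j - 1)) + 1 + q%:Z * theta r n b).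
Proof.
have hF' : #|F| = (2 ^ r)%N by rewrite hF hq.
subst q.
rewrite -hF'.
set q := #|F|.
have q1 : (1 < q)%N by rewrite /q hF' -{1}(expn0 2) ltn_exp2l.
have n2 : (1 < n)%N by rewrite hn -{1}(expn0 2) ltn_exp2l.
set C := 'C(n, 2).
have C0 : (0 < C)%N by rewrite /C bin_gt0.
set P := \prod_(2 <= j < n.+1) ((q%:Z) ^+ j - 1).
have hN1 : (N1 F n)%:Z = (q%:Z) ^+ C * P.
  have := card_SL F (ltnW n2); rewrite card_GL ?(ltnW n2) // big_ltn ?ltnS ?(ltnW n2) //.
  rewrite expn1 mulnCA [X in X = _]mulnC => /eqP; rewrite eqn_pmul2l ?subn_gt0 // => /eqP ->.
  rewrite -[LHS]natz natrM natrX natr_prod natz /P; congr (_ * _); apply: eq_bigr => j _.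
  by rewrite natrB ?expn_gt0 ?(ltnW q1) // natrX natz.
have hW : \sum_(a : F | a != 0) lam r (a * b) * Hs r n 1 a = 1 + (q%:Z) * theta r n b.
  rewrite hn (Wsum hr hF' _ hs) /theta; case: eqP => [_|/eqP bn0]; first by rewrite mulr0 addr0.
  rewrite addrC -hn.
  have -> : n.-1 = (n - 2).+1 by lia.
  by rewrite (H_kloosterman hr hF') ?invr_eq0 // natz.
have hcnt : (n_beta n b)%:Z * q%:Z = (N1 F n)%:Z + (q%:Z) ^+ C * (1 + q%:Z * theta r n b).
  rewrite -hW.
  have e1 : (n_beta n b)%:Z = \sum_(g : 'M[F]_n | \det g == 1) ((\tr g == b)%:R : int).
    rewrite /n_beta -sum1_card -[LHS]natz natr_sum big_mkcond [RHS]big_mkcond /=.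
    apply: eq_bigr => g _; rewrite inE; case: (\det g == 1); case: (\tr g == b) => //.
  rewrite e1 big_distrl /=.
  rewrite (eq_bigr (fun g : 'M[F]_n => \sum_a lam r (a * (\tr g - b)))); last first.
    move=> g _; rewrite (sum_lam_all hr hF') subr_eq0; case: eqP => _.
      by rewrite mul1r natz.
    by rewrite mul0r.
  rewrite exchange_big /=.
  rewrite (eq_bigr (fun a => lam r (a * b) * Zs r n 1 a)); last first.
    move=> a _; rewrite /Zs big_distrr /=; apply: eq_bigr => g _.
    by rewrite mulrBr -mulrN lamD // mulrN (lamN hF') mulrC.
  rewrite (bigD1 0) //=; congr (_ + _).
    rewrite mul0r lam0 // mul1r /Zs /N1 -sum1_card -natz natr_sum.
    rewrite (eq_bigr (fun _ => 1)) => [|g _]; last by rewrite mul0r lam0.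
    by apply: eq_bigl => g; rewrite inE.
  rewrite big_distrr /=; apply: eq_bigr => a an0.
  by rewrite (Zs_H hr hF') ?oner_neq0 // natrX natz mulrCA.
apply: (mulIf (x := q%:Z)); first by rewrite -natz pnatr_eq0 -lt0n ltnW.
rewrite hcnt hN1 mulrAC -exprSr subn1 prednK //.
ring.
Qed.
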